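(* Let $m$ be even and $n\in\mathbf{N}$. Let $q:M^{(m^n)}\to H^{(m^n)}$ be the homomorphism of $\mathbf{Z}S_{mn}$-modules sending an $(m^n)$-tabloid to the set partition whose sets are the rows of the tabloid. Then the Specht module $S^{(m^n)}\subseteq M^{(m^n)}$ is not contained in the kernel of $q$.
   Context: $M^{(m^n)}$ is the Young permutation $\mathbf{Z}S_{mn}$-module with basis the $(m^n)$-tabloids (tableaux of shape $(m^n)$ with entries a fixed $mn$-set, rows unordered). $H^{(m^n)}$ is the permutation $\mathbf{Z}S_{mn}$-module with basis the set partitions of the same $mn$-set into $n$ sets each of size $m$. $S^{(m^n)}$ is the Specht module, the $\mathbf{Z}$-span of the polytabloids $e_t=\{t\}\sum_{\tau\in C(t)}\mathrm{sgn}(\tau)\tau$, $C(t)$ the column stabilizer of $t$. *)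

(* Defs.v *)
From mathcomp Require Import all_boot all_order all_algebra all_fingroup.
Set Implicit Arguments. Unset Strict Implicit. Unset Printing Implicit Defensive.
Import GRing.Theory.
Local Open Scope ring_scope.

(* Cells of the shape (m^n) are 'I_n * 'I_m
   (row, column).
   - A tableau of shape (m^n) is a bijection entries -> cells, represented as
     an injective finite function g : 'I_(m*n) -> 'I_n * 'I_m
     (g x = cell in which x sits).
   - An (m^n)-tabloid is represented by its row function
     T : 'I_(m*n) -> 'I_n (T x = row containing x), each row of size m.
   - M^(m^n) is the free Z-module on tabloids: integer-valued functions on
     row functions (only tabloids are ever in the support of the vectors
     considered; q only reads tabloid coordinates).
   - H^(m^n) is the free Z-module on set partitions, embedded in the free
     Z-module on all sets of subsets of 'I_(m*n). *)

Section Defs.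
Variables m n : nat.

Definition rowfunT := {ffun 'I_(m*n) -> 'I_n}.
Definition tableauT := {ffun 'I_(m*n) -> 'I_n * 'I_m}.

Definition is_tableau (g : tableauT) : bool := injectiveb g.

Definition is_tabloid (T : rowfunT) : bool :=
  [forall i : 'I_n, #|[set x | T x == i]| == m].

Definition is_setpartition (P : {set {set 'I_(m*n)}}) : bool :=
  [&& partition P [set: 'I_(m*n)], #|P| == n & [forall B in P, #|B| == m]].

Definition Mmod := {ffun rowfunT -> int}.
Definition Hmod := {ffun {set {set 'I_(m*n)}} -> int}.

Definition tabloid_vec (T : rowfunT) : Mmod := [ffun T' => ((T' == T) : nat)%:Z].

Definition tabloid_of (g : tableauT) : rowfunT := [ffun x => (g x).1].

(* action of a permutation on (row functions of) tabloids:
   sigma {t} = {sigma t}, and x lies in row i of t iff sigma x lies in row i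
   of sigma t. *)
Definition perm_act (s : {perm 'I_(m*n)}) (T : rowfunT) : rowfunT :=
  [ffun y => T ((s^-1)%g y)].

Definition colstab (g : tableauT) : {set {perm 'I_(m*n)}} :=
  [set s : {perm 'I_(m*n)} | [forall x, (g (s x)).2 == (g x).2]].

Definition sgn (s : {perm 'I_(m*n)}) : int := (-1) ^+ (odd_perm s).

Definition polytabloid (g : tableauT) : Mmod :=
  \sum_(s in colstab g) [ffun T => sgn s * tabloid_vec (perm_act s (tabloid_of g)) T].

Definition in_specht (v : Mmod) : Prop :=
  exists (c : {ffun tableauT -> int}),
    (forall g, ~~ is_tableau g -> c g = 0) /\
    v = \sum_(g : tableauT) [ffun T => c g * polytabloid g T].

Definition rows_of (T : rowfunT) : {set {set 'I_(m*n)}} :=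
  [set [set x | T x == i] | i : 'I_n].

Definition qmap (v : Mmod) : Hmod :=
  [ffun P => \sum_(T : rowfunT | is_tabloid T && (rows_of T == P)) v T].

End Defs.

(* Main.v *)
Require Import Defs.
From mathcomp Require Import all_boot all_order all_algebra all_fingroup.
From mathcomp Require Import zify.
Set Implicit Arguments. Unset Strict Implicit. Unset Printing Implicit Defensive.
Import GRing.Theory Num.Theory.

Section S.
Variables m n : nat.
Hypothesis hm0 : (0 < m)%N.
Hypothesis hm : ~~ odd m.

Lemma row_lt (x : 'I_(m*n)) : (x %/ m < n)%N.
Proof. rewrite ltn_divLR //; have := ltn_ord x; lia. Qed.
Definition rw (x : 'I_(m*n)) : 'I_n := Ordinal (row_lt x).
Lemma col_lt (x : 'I_(m*n)) : (x %% m < m)%N.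
Proof. by rewrite ltn_mod. Qed.
Definition cl (x : 'I_(m*n)) : 'I_m := Ordinal (col_lt x).
Lemma enc_lt (i : 'I_n) (j : 'I_m) : (i * m + j < m * n)%N.
Proof. have := ltn_ord i; have := ltn_ord j; nia. Qed.
Definition enc i j : 'I_(m*n) := Ordinal (enc_lt i j).
Lemma rw_enc i j : rw (enc i j) = i.
Proof. apply: val_inj => /=. by rewrite divnMDl // divn_small // addn0. Qed.
Lemma cl_enc i j : cl (enc i j) = j.
Proof. apply: val_inj => /=; rewrite modnMDl modn_small //. Qed.
Lemma enc_rw_cl x : enc (rw x) (cl x) = x.
Proof. apply: val_inj => /=; by rewrite -divn_eq. Qed.

Definition half := m./2.
Lemma mhalf : m = (half + half)%N.
Proof. move: (odd_double_half m); rewrite (negbTE hm) add0n -addnn /half => h; by rewrite {1}h. Qed.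
Lemma sw_lt (j : 'I_m) : ((if (j < half)%N then j + half else j - half) < m)%N.
Proof. have := ltn_ord j; have := mhalf; case: ifP => /ltP ? ? ?; lia. Qed.
Definition sw j : 'I_m := Ordinal (sw_lt j).
Lemma swK : involutive sw.
Proof.
move=> j; apply: val_inj => /=. have := ltn_ord j; have := mhalf => e hj.
case: (ltnP j half) => h /=.
  have -> : (j + half < half)%N = false by apply/negbTE; rewrite -leqNgt; lia.
  lia.
have -> : (j - half < half)%N = true by apply/idP; lia.
lia.
Qed.
Lemma sw_half j : (sw j < half)%N = ~~ (j < half)%N.
Proof. have := ltn_ord j; have := mhalf => e hj; rewrite /=; case: (ltnP j half) => h /=.
  by apply/negbTE; rewrite -leqNgt; lia.
by apply/idP; lia.
Qed.

Definition cf x := enc (rw x) (sw (cl x)).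
Lemma cf_inj : injective cf.
Proof.
move=> x y /(congr1 (fun z => (rw z, cl z))); rewrite /cf !rw_enc !cl_enc => [[e1 e2]].
have e2' : sw (cl x) = sw (cl y) by apply: val_inj.
have e1' : rw x = rw y by apply: val_inj.
have e3 : cl x = cl y by rewrite -(swK (cl x)) e2' swK.
by rewrite -(enc_rw_cl x) -(enc_rw_cl y) e1' e3.
Qed.
Definition cp := perm cf_inj.
Lemma cpE x : cp x = enc (rw x) (sw (cl x)). Proof. by rewrite permE. Qed.
Lemma cpK x : cp (cp x) = x.
Proof. by rewrite !cpE rw_enc cl_enc swK enc_rw_cl. Qed.
Lemma cl_cp x : cl (cp x) = sw (cl x). Proof. by rewrite cpE cl_enc. Qed.
Lemma rw_cp x : rw (cp x) = rw x. Proof. by rewrite cpE rw_enc. Qed.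
Lemma cpV x : (cp^-1)%g x = cp x.
Proof. by rewrite -{1}(cpK x) permK. Qed.

Definition g0 : tableauT m n := [ffun x => (rw x, cl x)].
Definition T0 : rowfunT m n := tabloid_of g0.
Lemma T0E x : T0 x = rw x. Proof. by rewrite /T0 /tabloid_of !ffunE. Qed.

Lemma key (s : {perm 'I_(m*n)}) : (forall x, cl (s x) = cl x) ->
  rows_of (perm_act s T0) = rows_of T0 -> odd_perm s = false.
Proof.
move=> Hc Hr.
have Hk : forall i, exists k, forall y, (rw y == i) = (rw (s y) == k).
  move=> i.
  have : [set x | perm_act s T0 x == i] \in rows_of T0 by rewrite -Hr; apply: imset_f.
  case/imsetP => k _ Ek; exists k => y.
  move/setP: Ek => /(_ (s y)); rewrite !inE /perm_act ffunE permK !T0E; done.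
pose z0 : 'I_m := Ordinal hm0.
pose f i := rw (s (enc i z0)).
have Hs : forall y, s y = enc (f (rw y)) (cl y).
  move=> y; have [k Ek] := Hk (rw y).
  have e1 := Ek y; rewrite eqxx in e1.
  have e2 := Ek (enc (rw y) z0); rewrite rw_enc eqxx in e2.
  rewrite -[s y]enc_rw_cl Hc /f; by rewrite (eqP (esym e1)) (eqP (esym e2)).
pose af x := if (cl x < half)%N then s x else x.
have Ainj : injective af.
  move=> x y; rewrite /af; case: ifP => hx; case: ifP => hy.
  - exact: perm_inj.
  - by move=> e; move: hy; rewrite -e Hc hx.
  - by move=> e; move: hx; rewrite e Hc hy.
  - done.
pose A := perm Ainj.
have AE x : A x = af x by rewrite permE.
suff -> : s = (A * A ^ cp)%g by rewrite odd_permM odd_permJ addbb.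
apply/permP => x; rewrite permM conjgE !permM cpV !AE /af.
case: (boolP (cl x < half)%N) => hx.
  by rewrite cl_cp sw_half Hc hx /= cpK.
rewrite cl_cp sw_half hx /= [s (cp x)]Hs rw_cp cl_cp cpE rw_enc cl_enc swK.
by rewrite -Hs.
Qed.

Lemma g0_inj : is_tableau g0.
Proof.
apply/injectiveP => x y; rewrite !ffunE => -[e1 e2].
have e1' : rw x = rw y by apply: val_inj.
have e2' : cl x = cl y by apply: val_inj.
by rewrite -(enc_rw_cl x) -(enc_rw_cl y) e1' e2'.
Qed.

Lemma T0_tab : is_tabloid T0.
Proof.
apply/forallP => i; apply/eqP.
have -> : [set x | T0 x == i] = [set enc i j | j : 'I_m].
  apply/setP => x; rewrite inE T0E; apply/eqP/imsetP => [<-|[j _ ->]]; last by rewrite rw_enc.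
  by exists (cl x); rewrite ?enc_rw_cl.
by rewrite card_imset ?card_ord //; apply: (can_inj (cl_enc i)).
Qed.

Lemma term_ge0 T s : is_tabloid T && (rows_of T == rows_of T0) -> s \in colstab g0 ->
  (0 <= [ffun T => sgn s * tabloid_vec (perm_act s (tabloid_of g0)) T] T)%R.
Proof.
move=> /andP[_ /eqP hT] hs; rewrite !ffunE.
case: eqP => [eT|_]; last by rewrite GRing.mulr0.
have Hc : forall x, cl (s x) = cl x.
  move=> x; move: hs; rewrite inE => /forallP /(_ x); rewrite !ffunE => /eqP //.
have hr : rows_of (perm_act s T0) = rows_of T0 by rewrite -hT eT.
by rewrite /sgn (key Hc hr) GRing.expr0 GRing.mul1r.
Qed.

Lemma one_col : (1%g : {perm 'I_(m*n)}) \in colstab g0.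
Proof. rewrite inE; apply/forallP => x; by rewrite perm1. Qed.

End S.


Theorem lemma4p1 (m n : nat) (hm : ~~ odd m) (hm0 : 0 < m) :
  ~ (forall v : Mmod m n, in_specht v -> qmap v = 0%R).
Proof.
move=> H.
pose v := polytabloid (g0 n hm0 hm).
have hv : in_specht v.
  exists [ffun g => ((g == g0 n hm0 hm) : nat)%:Z%R]; split.
    move=> g ng; rewrite ffunE; case: eqP => // eg; by move: ng; rewrite eg (g0_inj n hm0 hm).
  apply/ffunP => T; rewrite [RHS]sum_ffunE (bigD1 (g0 n hm0 hm)) //= [X in (_ + X)%R]big1 => [|g ng]; rewrite ?ffunE ?eqxx.
    by rewrite GRing.mul1r GRing.addr0.
  by rewrite (negbTE ng) GRing.mul0r.
move: (H v hv) => /ffunP /(_ (rows_of (T0 n hm0 hm))); rewrite !ffunE => h0.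
suff : (0 < \sum_(T | is_tabloid T && (rows_of T == rows_of (T0 n hm0 hm))) v T)%R.
  by rewrite h0 Order.POrderTheory.ltxx.
rewrite (bigD1 (T0 n hm0 hm)) /=; last by rewrite (T0_tab n hm0 hm) eqxx.
have Hrest : (0 <= \sum_(T | (is_tabloid T && (rows_of T == rows_of (T0 n hm0 hm))) && (T != T0 n hm0 hm)) v T)%R.
  apply: Num.Theory.sumr_ge0 => T /andP[hT _].
  rewrite /v /polytabloid sum_ffunE; apply: Num.Theory.sumr_ge0 => s hs.
  exact: term_ge0.
have Hfirst : (v (T0 n hm0 hm) = 1 + \sum_(s in colstab (g0 n hm0 hm) | s != 1%g) [ffun T => sgn s * tabloid_vec (perm_act s (tabloid_of (g0 n hm0 hm))) T] (T0 n hm0 hm))%R.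
  rewrite /v /polytabloid sum_ffunE (bigD1 1%g) ?(one_col n hm0 hm) //=; congr (_ + _)%R.
  have -> : perm_act 1 (tabloid_of (g0 n hm0 hm)) = T0 n hm0 hm.
    by apply/ffunP => y; rewrite ffunE invg1 perm1.
  by rewrite !ffunE /sgn odd_perm1 eqxx.
have Hr2 : (0 <= \sum_(s in colstab (g0 n hm0 hm) | s != 1%g) [ffun T => sgn s * tabloid_vec (perm_act s (tabloid_of (g0 n hm0 hm))) T] (T0 n hm0 hm))%R.
  apply: Num.Theory.sumr_ge0 => s /andP[hs _]; apply: term_ge0 => //.
  by rewrite (T0_tab n hm0 hm) eqxx.
rewrite Hfirst; apply: Num.Theory.ltr_wpDr => //; apply: Num.Theory.ltr_pwDl => //.
Qed.
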